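(* In the setting below, let $D(\alpha)=\mathrm{Var}_{\rho}(E_{loc})-\mathrm{Var}_{\phi_\alpha}(E_{loc}\kappa_\alpha)$. Then: (i) if $0\le\alpha\le 2$, then $D(\alpha)\ge 0$; (ii) if $\alpha<0$ or $\alpha>2$, then $D(\alpha)\le 0$; (iii) $D(0)=0$, $D(2)=0$, and $D(1)=\mathrm{Var}_\rho(|E_{loc}|)\ge 0$.
   Context: Let $\mathbb{V}=\{-1,1\}^n$, let $\rho:\mathbb{V}\to(0,1]$, $v\mapsto\rho^v_v$, be a probability distribution, and let $E_{loc}:\mathbb{V}\to\mathbb{R}$ satisfy $E_{loc}(v)\ne 0$ for all $v$. For $\alpha\in\mathbb{R}$ set $\lambda_\alpha=\big(\sum_v|E_{loc}(v)|^\alpha\rho^v_v\big)^{-1}$, $\kappa_\alpha(v)=1/(\lambda_\alpha|E_{loc}(v)|^\alpha)$, and $\phi_\alpha(v)=\lambda_\alpha|E_{loc}(v)|^\alpha\rho^v_v$ (a probability distribution with $\rho^v_v=\kappa_\alpha(v)\phi_\alpha(v)$). For a probability distribution $q$ on $\mathbb{V}$, $\mathrm{Var}_q(f)=\sum_vq(v)f(v)^2-(\sum_vq(v)f(v))^2$. *)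

(* Defs.v *)
From HB Require Import structures.
From mathcomp Require Import all_boot all_order all_algebra.
From mathcomp Require Import reals exp.
Set Implicit Arguments. Unset Strict Implicit. Unset Printing Implicit Defensive.
Import Order.TTheory GRing.Theory Num.Theory.
Local Open Scope ring_scope.

(* The configuration space V = {-1,1}^n; a spin s_i = -1/+1 is encoded by
   the boolean false/true. *)
Definition spinV (n : nat) : finType := {ffun 'I_n -> bool}.

Section Defs.
Variables (R : realType) (n : nat).

Definition Var (q f : spinV n -> R) : R :=
  \sum_v q v * f v ^+ 2 - (\sum_v q v * f v) ^+ 2.

Variables (rho E : spinV n -> R).

Definition lambda_ (alpha : R) : R :=
  (\sum_v powR `|E v| alpha * rho v)^-1.

Definition kappa_ (alpha : R) (v : spinV n) : R :=
  (lambda_ alpha * powR `|E v| alpha)^-1.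

Definition phi_ (alpha : R) (v : spinV n) : R :=
  lambda_ alpha * powR `|E v| alpha * rho v.

Definition Dfun (alpha : R) : R :=
  Var rho E - Var (phi_ alpha) (fun v => E v * kappa_ alpha v).

End Defs.

(* Main.v *)
Require Import Defs.
From HB Require Import structures.
From mathcomp Require Import all_boot all_order all_algebra.
From mathcomp Require Import reals exp.
From mathcomp Require Import ring lra.
Import Order.TTheory GRing.Theory Num.Theory.
Local Open Scope ring_scope.

Lemma key (R : realType) (n : nat) (rho F G : spinV n -> R)
  (rho_sum : \sum_v rho v = 1) :
  \sum_v rho v * (F v * G v) - (\sum_v rho v * F v) * (\sum_v rho v * G v)
  = 2^-1 * \sum_u \sum_v rho u * rho v * ((F u - F v) * (G u - G v)).
Proof.
set SF := \sum_v rho v * F v; set SG := \sum_v rho v * G v.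
set SFG := \sum_v rho v * (F v * G v).
have inner : forall u, \sum_v rho u * rho v * ((F u - F v) * (G u - G v)) =
  rho u * (F u * G u) - (rho u * F u) * SG - (rho u * G u) * SF + rho u * SFG.
  move=> u.
  have e : forall v, rho u * rho v * ((F u - F v) * (G u - G v)) =
    rho u * (F u * G u) * rho v - rho u * F u * (rho v * G v)
    - rho u * G u * (rho v * F v) + rho u * (rho v * (F v * G v)).
    by move=> v; ring.
  under eq_bigr do rewrite e.
  by rewrite big_split /= !sumrB -!mulr_sumr rho_sum mulr1.
under eq_bigr do rewrite inner.
rewrite big_split /= !sumrB -!mulr_suml.
rewrite -/SF -/SG -/SFG rho_sum mul1r.
field.
by [].
Qed.

Lemma sign_pos (R : realType) (x y p q : R) : 0 < x -> 0 < y -> 0 <= p -> 0 <= q ->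
  0 <= (powR x p - powR y p) * (powR x q - powR y q).
Proof.
move=> x0 y0 p0 q0.
have hx : x \is Num.nneg by rewrite nnegrE ltW.
have hy : y \is Num.nneg by rewrite nnegrE ltW.
have [xy|yx] := leP x y.
  apply: mulr_le0; rewrite subr_le0; exact: ge0_ler_powR.
apply: mulr_ge0; rewrite subr_ge0; apply: ge0_ler_powR => //; exact: ltW.
Qed.

Lemma sign_neg (R : realType) (x y p q : R) : 0 < x -> 0 < y -> p < 0 -> 0 <= q ->
  (powR x p - powR y p) * (powR x q - powR y q) <= 0.
Proof.
move=> x0 y0 p0 q0.
have hx : x \is Num.nneg by rewrite nnegrE ltW.
have hy : y \is Num.nneg by rewrite nnegrE ltW.
have np : 0 <= - p by rewrite oppr_ge0 ltW.
have e : forall z, powR z p = (powR z (- p))^-1 by move=> z; rewrite -powRN opprK.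
rewrite !e.
have [xy|yx] := leP x y.
  apply: mulr_ge0_le0; last by rewrite subr_le0; exact: ge0_ler_powR.
  rewrite subr_ge0 lef_pV2 ?posrE ?powR_gt0 //; exact: ge0_ler_powR.
apply: mulr_le0_ge0; last by rewrite subr_ge0; apply: ge0_ler_powR => //; exact: ltW.
rewrite subr_le0 lef_pV2 ?posrE ?powR_gt0 //; apply: ge0_ler_powR => //; exact: ltW.
Qed.

Lemma Dform (R : realType) (n : nat) (rho E : spinV n -> R)
  (rho_pos : forall v, 0 < rho v) (rho_sum : \sum_v rho v = 1)
  (E_nz : forall v, E v != 0) (alpha : R) :
  Dfun rho E alpha = 2^-1 * \sum_u \sum_v rho u * rho v *
    ((powR `|E u| alpha - powR `|E v| alpha) *
     (powR `|E u| (2 - alpha) - powR `|E v| (2 - alpha))).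
Proof.
rewrite -key //.
have a0 : forall v, 0 < `|E v| by move=> v; rewrite normr_gt0.
have p0 : forall v, powR `|E v| alpha != 0 by move=> v; rewrite gt_eqF ?powR_gt0.
have E2 : forall v, E v ^+ 2 = powR `|E v| alpha * powR `|E v| (2 - alpha).
  move=> v; rewrite -powRD; last by rewrite normr_eq0 E_nz implybT.
  by rewrite addrC subrK -real_normK ?num_real // -powR_mulrn // ltW.
set S := \sum_v powR `|E v| alpha * rho v.
have Hnn : forall v : spinV n, true -> 0 <= powR `|E v| alpha * rho v.
  by move=> v _; rewrite mulr_ge0 ?powR_ge0 // ltW.
have S0 : S != 0.
  apply/eqP => /(psumr_eq0P Hnn) H.
  have := H [ffun=> true] isT.
  have : 0 < powR `|E [ffun=> true]| alpha * rho [ffun=> true]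
    by rewrite mulr_gt0 ?powR_gt0.
  by move=> /gt_eqF; rewrite -/(is_true _) => /eqP.
rewrite /Dfun /Var /phi_ /kappa_ /lambda_ -/S.
have e1 : forall v, S^-1 * powR `|E v| alpha * rho v *
    (E v * (S^-1 * powR `|E v| alpha)^-1) = rho v * E v.
  by move=> v; field; rewrite S0 p0.
have e2 : forall v, S^-1 * powR `|E v| alpha * rho v *
    (E v * (S^-1 * powR `|E v| alpha)^-1) ^+ 2
    = S * (rho v * powR `|E v| (2 - alpha)).
  move=> v; rewrite exprMn E2; field; by rewrite S0 p0.
rewrite (eq_bigr _ (fun v _ => e1 v)) (eq_bigr _ (fun v _ => e2 v)).
rewrite -mulr_sumr (eq_bigr (fun v => rho v * (powR `|E v| alpha * powR `|E v| (2 - alpha)))); last by move=> v _; rewrite E2.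
rewrite /S.
have -> : \sum_v powR `|E v| alpha * rho v = \sum_v rho v * powR `|E v| alpha by apply: eq_bigr => v _; rewrite mulrC.
ring.
Qed.

Theorem lemmaC3 (R : realType) (n : nat) (rho E : spinV n -> R)
  (rho_pos : forall v, 0 < rho v) (rho_le1 : forall v, rho v <= 1)
  (rho_sum : \sum_v rho v = 1)
  (E_nz : forall v, E v != 0) :
  (forall alpha : R, 0 <= alpha <= 2 -> 0 <= Dfun rho E alpha) /\
  (forall alpha : R, alpha < 0 \/ 2 < alpha -> Dfun rho E alpha <= 0) /\
  (Dfun rho E 0 = 0 /\ Dfun rho E 2 = 0 /\
   Dfun rho E 1 = Var rho (fun v => `|E v|) /\ 0 <= Var rho (fun v => `|E v|)).
Proof.
have a0 : forall v, 0 < `|E v| by move=> v; rewrite normr_gt0.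
have rr : forall u v, 0 <= rho u * rho v by move=> u v; rewrite mulr_ge0 ?ltW.
have h2 : (0 : R) <= 2^-1 by rewrite invr_ge0.
have P1 : forall alpha : R, 0 <= alpha <= 2 -> 0 <= Dfun rho E alpha.
  move=> alpha /andP[h0 h1]; rewrite Dform //.
  apply: mulr_ge0 => //; apply: sumr_ge0 => u _; apply: sumr_ge0 => v _.
  apply: mulr_ge0 => //; apply: sign_pos => //; by rewrite subr_ge0.
have D1 : Dfun rho E 1 = Var rho (fun v => `|E v|).
  rewrite Dform // -key //.
  have -> : (2 - 1 : R) = 1 by ring.
  rewrite /Var; congr (_ - _).
    by apply: eq_bigr => v _; rewrite powRr1 ?ltW // expr2.
  by rewrite expr2; congr (_ * _); apply: eq_bigr => v _; rewrite powRr1 ?ltW.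
split=> //; split.
  move=> alpha [h|h]; rewrite Dform //.
    apply: mulr_ge0_le0 => //; apply: sumr_le0 => u _; apply: sumr_le0 => v _.
    apply: mulr_ge0_le0 => //; apply: sign_neg => //; lra.
  apply: mulr_ge0_le0 => //; apply: sumr_le0 => u _; apply: sumr_le0 => v _.
  apply: mulr_ge0_le0 => //; rewrite mulrC; apply: sign_neg => //; lra.
split; first by rewrite Dform // big1 ?mulr0 // => u _; rewrite big1 // => v _;
  rewrite !powRr0 subrr mul0r mulr0.
split; first by rewrite Dform // big1 ?mulr0 // => u _; rewrite big1 // => v _;
  rewrite subrr !powRr0 subrr mulr0 mulr0.
split => //; rewrite -D1; apply: P1; lra.
Qed.
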